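(* Every strongly $n$-torsion clean ring is Dedekind finite (i.e. $ab=1$ implies $ba=1$).
   Context: All rings are associative with identity. A ring $R$ is strongly $n$-torsion clean if every $r\in R$ can be written $r=e+u$ with $e^2=e$, $u$ a unit, $u^n=1$ and $eu=ue$, and $n$ is the smallest natural number with this property. *)

(* Defs.v *)
From HB Require Import structures.
From mathcomp Require Import all_boot all_algebra.
Set Implicit Arguments. Unset Strict Implicit. Unset Printing Implicit Defensive.
Import GRing.Theory.
Local Open Scope ring_scope.

Definition is_unit (R : pzRingType) (u : R) : Prop :=
  exists v : R, u * v = 1 /\ v * u = 1.

Definition n_torsion_clean_decomp (R : pzRingType) (n : nat) : Prop :=
  forall r : R, exists e u : R,
    [/\ e * e = e, is_unit u, u ^+ n = 1, e * u = u * e & r = e + u].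

Definition strongly_n_torsion_clean (R : pzRingType) (n : nat) : Prop :=
  [/\ (0 < n)%N, n_torsion_clean_decomp R n &
      forall m : nat, (0 < m)%N -> (m < n)%N -> ~ n_torsion_clean_decomp R m].

Definition dedekind_finite (R : pzRingType) : Prop :=
  forall a b : R, a * b = 1 -> b * a = 1.

(* Main.v *)
Require Import Defs.
From mathcomp Require Import all_boot all_algebra.
Import GRing.Theory.
Local Open Scope ring_scope.

Section Aux.
Variable R : pzRingType.

Lemma idem_exp (f x : R) k : f * f = f -> f * x = x * f ->
  (f * x) ^+ k.+1 = f * x ^+ k.+1.
Proof.
move=> ff fx; elim: k => [|k IH]; first by rewrite !expr1.
rewrite exprS IH exprS mulrA -(mulrA f x f) -fx mulrA.
by rewrite mulrA ff -!mulrA -exprS.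
Qed.

Lemma abk (a b : R) k : a * b = 1 -> a ^+ k * b ^+ k = 1.
Proof.
move=> ab; elim: k => [|k IH]; first by rewrite !expr0 mulr1.
by rewrite exprSr exprS -mulrA (mulrA a b) ab mul1r.
Qed.

Lemma abkj (a b : R) i k : a * b = 1 -> a ^+ (i + k) * b ^+ k = a ^+ i.
Proof. by move=> ab; rewrite exprD -mulrA abk // mulr1. Qed.

Lemma abkj2 (a b : R) j k : a * b = 1 -> a ^+ k * b ^+ (k + j) = b ^+ j.
Proof. by move=> ab; rewrite exprD mulrA abk // mul1r. Qed.
End Aux.

Theorem corollary2p5 (R : pzRingType) (n : nat) :
  strongly_n_torsion_clean R n -> dedekind_finite R.
Proof.
case: n => [|m]; first by case.
case=> _ dec _ a b ab.
set n := m.+1.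
have n0 : (0 < n)%N by [].
have [e [u [ee _ un eu be]]] := dec b.
set f := 1 - e.
have eb : e * b = b * e by rewrite be mulrDl mulrDr ee eu.
have ff : f * f = f by rewrite /f mulrBl mul1r mulrBr mulr1 ee subrr subr0.
have fb : f * b = b * f by rewrite /f mulrBl mulrBr mul1r mulr1 eb.
have fe : f * e = 0 by rewrite /f mulrBl mul1r ee subrr.
have fu : f * b = f * u by rewrite be mulrDr fe add0r.
have fuc : f * u = u * f by rewrite /f mulrBl mulrBr mul1r mulr1 eu.
have fbn : f * b ^+ n = f.
  by rewrite /n -idem_exp // fu idem_exp // un mulr1.
have e1 : e * (b - 1) = e * u by rewrite be addrAC mulrDr mulrBr ee mulr1 subrr add0r.
have ecb : e * (b - 1) = (b - 1) * e by rewrite mulrBr mulrBl mulr1 mul1r eb.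
have ebn : (b - 1) ^+ n * e = e.
  by rewrite /n -(commrX _ ecb) -idem_exp // e1 idem_exp // un mulr1.
set g := 1 - b * a.
have gb : g * b = 0 by rewrite /g mulrBl mul1r -mulrA ab mulr1 subrr.
have ag : a * g = 0 by rewrite /g mulrBr mulr1 mulrA ab mul1r subrr.
have gg : g * g = g by rewrite /g mulrBr mulr1 mulrBl mul1r -mulrA (mulrA a b) ab mul1r subrr subr0.
have gbk k : g * b ^+ k.+1 = 0 by rewrite exprS mulrA gb mul0r.
have f2 : b ^+ (n + n) * f = f.
  by rewrite -(commrX _ fb) exprD mulrA fbn fbn.
have gakf k : (k <= n)%N -> g * a ^+ k * f = 0.
  move=> kn; rewrite -f2 mulrA -(mulrA g).
  have -> : (n + n = k + (n + n - k))%N by rewrite subnKC // (leq_trans kn (leq_addr n n)).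
  rewrite abkj2 //.
  have : (0 < n + n - k)%N by rewrite subn_gt0 (leq_ltn_trans kn) // -addn1 leq_add2l.
  by case: (n + n - k)%N => // j _; rewrite gbk mul0r.
have gakg k : g * a ^+ k.+1 * g = 0 by rewrite exprSr mulrA -(mulrA _ a g) ag !mulr0.
have ef : e = 1 - f by rewrite /f opprB addrC subrK.
have gdef : g = 1 - b * a by [].
clearbody f g.
have hk k : (0 < k <= n)%N -> g * a ^+ k * e * g = 0.
  case: k => // k /andP[_ kn].
  by rewrite ef mulrBr mulr1 mulrBl gakf // mul0r subr0 gakg.
have h0 : g * e * g = g.
  have := gakf 0%N (leq0n n); rewrite expr0 mulr1 => gf.
  by rewrite ef mulrBr mulr1 mulrBl gf mul0r subr0 gg.
have main : g * a ^+ n * ((b - 1) ^+ n * e) * g = 0.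
  rewrite ebn; apply: hk; by rewrite n0 leqnn.
move: main; rewrite (exprDn_comm _ (commrN1 b)) mulr_suml mulr_sumr mulr_suml.
rewrite big_ord_recl /= subn0 expr0 mulr1 bin0 mulr1n.
rewrite (mulrA (g * a ^+ n) (b ^+ n) e) -(mulrA g) abk // mulr1 h0.
rewrite big1 ?addr0; first by move=> g0 ; move: g0; rewrite gdef => /eqP; rewrite subr_eq0 => /eqP <-.
move=> [i /= hi] _.
rewrite /bump /= add1n.
have -> : g * a ^+ n * ((b ^+ (n - i.+1) * (-1) ^+ i.+1) *+ 'C(n, i.+1) * e) * g
   = (g * a ^+ i.+1 * e * g) * ((-1) ^+ i.+1 *+ 'C(n, i.+1)).
  rewrite mulrnAl !mulrnAr mulrnAl; congr (_ *+ _).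
  have ni : n = (i.+1 + (n - i.+1))%N by rewrite subnKC.
  rewrite -(mulrA _ _ e) -(commr_sign e) !mulrA -!mulrA -(commr_sign g) !mulrA.
  congr (_ * _ * _ * _).
  by rewrite {1}ni -(mulrA g) abkj.
by rewrite hk ?mul0r // hi.
Qed.
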